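(* Let $(A_i,\omega_i)$, $i=1,2$, be associative baric algebras over $K$. Then the following are equivalent: (i) $A_1\bowtie A_2$ is associative; (ii) $A_1\bowtie A_2$ is left alternative; (iii) $A_1\bowtie A_2$ is right alternative.
   Context: A baric algebra over a field $K$ is a pair $(A,\omega)$ where $A$ is a (not necessarily associative) $K$-algebra and $\omega:A\to K$ is a nonzero $K$-algebra homomorphism. For baric algebras $(A_1,\omega_1),(A_2,\omega_2)$, $A_1\bowtie A_2$ denotes the vector space $A_1\oplus A_2$ with product $(a_1,a_2)(b_1,b_2)=(a_1b_1+\omega_2(b_2)a_1,\ a_2b_2+\omega_1(b_1)a_2)$. With associator $(x,y,z)=(xy)z-x(yz)$, an algebra is left alternative if $(x,x,y)=0$ for all $x,y$, and right alternative if $(x,y,y)=0$ for all $x,y$. *)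

(* Defs.v *)
(* A (not necessarily associative) K-algebra is a K-vector
   space A (lmodType K) with a bilinear multiplication mul : A -> A -> A. *)
From HB Require Import structures.
From mathcomp Require Import all_boot all_order all_algebra.
Set Implicit Arguments. Unset Strict Implicit. Unset Printing Implicit Defensive.
Import GRing.Theory.
Local Open Scope ring_scope.

Definition bilinear_mul (K : fieldType) (A : lmodType K) (mul : A -> A -> A) :=
  (forall (a : K) (x y z : A), mul (a *: x + y) z = a *: mul x z + mul y z) /\
  (forall (a : K) (x y z : A), mul x (a *: y + z) = a *: mul x y + mul x z).

Definition baric (K : fieldType) (A : lmodType K) (mul : A -> A -> A)
    (w : A -> K) :=
  [/\ bilinear_mul mul,
      (forall (a : K) (x y : A), w (a *: x + y) = a * w x + w y),
      (forall x y : A, w (mul x y) = w x * w y) &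
      exists x : A, w x != 0].

Definition associator (K : fieldType) (A : lmodType K) (mul : A -> A -> A)
    (x y z : A) : A := mul (mul x y) z - mul x (mul y z).

Definition is_associative (K : fieldType) (A : lmodType K) (mul : A -> A -> A) :=
  forall x y z : A, associator mul x y z = 0.

Definition left_alternative (K : fieldType) (A : lmodType K) (mul : A -> A -> A) :=
  forall x y : A, associator mul x x y = 0.

Definition right_alternative (K : fieldType) (A : lmodType K) (mul : A -> A -> A) :=
  forall x y : A, associator mul x y y = 0.

Definition bowtie_mul (K : fieldType) (A1 A2 : lmodType K)
    (mul1 : A1 -> A1 -> A1) (w1 : A1 -> K)
    (mul2 : A2 -> A2 -> A2) (w2 : A2 -> K)
    (x y : A1 * A2) : A1 * A2 :=
  (mul1 x.1 y.1 + w2 y.2 *: x.1, mul2 x.2 y.2 + w1 y.1 *: x.2).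

(* Main.v *)
Require Import Defs.
From HB Require Import structures.
From mathcomp Require Import all_boot all_order all_algebra.
Local Open Scope ring_scope.
Import GRing.Theory.
Set Implicit Arguments.

Lemma dbl0 (V : zmodType) (x : V) : x = x + x -> x = 0.
Proof. move=> h; apply: (addrI x); by rewrite addr0 -h. Qed.

Lemma zm5 (V : zmodType) (P Q R S T : V) :
  P + Q + (R + S) - (P + R + (S + T)) = Q - T.
Proof.
have -> : P + R + (S + T) = (P + (R + S)) + T by rewrite !addrA.
have -> : P + Q + (R + S) = (P + (R + S)) + Q by rewrite addrAC addrA.
by rewrite [P + (R + S) + Q]addrC addrKA.
Qed.

Section Aux.
Variables (K : fieldType) (A : lmodType K) (mul : A -> A -> A) (w : A -> K).
Hypothesis hb : baric mul w.

Lemma w0 : w 0 = 0.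
Proof. case: hb => _ hw _ _. have := hw 1 0 0. rewrite scale1r addr0 mul1r. exact: dbl0. Qed.
Lemma wD x y : w (x + y) = w x + w y.
Proof. case: hb => _ hw _ _. by rewrite -(scale1r x) hw mul1r scale1r. Qed.
Lemma wZ a x : w (a *: x) = a * w x.
Proof. case: hb => _ hw _ _. by rewrite -(addr0 (a *: x)) hw w0 addr0. Qed.
Lemma wM x y : w (mul x y) = w x * w y.
Proof. by case: hb. Qed.
Lemma mul0l x : mul 0 x = 0.
Proof. case: hb => -[hl _] _ _ _. have := hl 1 0 0 x.
rewrite !scale1r addr0. exact: dbl0. Qed.
Lemma mul0r x : mul x 0 = 0.
Proof. case: hb => -[_ hr] _ _ _. have := hr 1 x 0 0.
rewrite !scale1r addr0. exact: dbl0. Qed.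
Lemma mulDl x y z : mul (x + y) z = mul x z + mul y z.
Proof. case: hb => -[hl _] _ _ _. by rewrite -(scale1r x) hl !scale1r. Qed.
Lemma mulDr x y z : mul x (y + z) = mul x y + mul x z.
Proof. case: hb => -[_ hr] _ _ _. by rewrite -(scale1r y) hr !scale1r. Qed.
Lemma mulZl a x z : mul (a *: x) z = a *: mul x z.
Proof. case: hb => -[hl _] _ _ _. by rewrite -(addr0 (a *: x)) hl mul0l addr0. Qed.
Lemma mulZr a x z : mul x (a *: z) = a *: mul x z.
Proof. case: hb => -[_ hr] _ _ _. by rewrite -(addr0 (a *: z)) hr mul0r addr0. Qed.
End Aux.

Lemma assocE (K : fieldType) (A : lmodType K) (mul : A -> A -> A) :
  is_associative mul -> forall x y z, mul (mul x y) z = mul x (mul y z).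
Proof. move=> h x y z; apply/eqP; rewrite -subr_eq0; exact/eqP/h. Qed.

Section Main.
Variables (K : fieldType) (A1 A2 : lmodType K)
    (mul1 : A1 -> A1 -> A1) (w1 : A1 -> K)
    (mul2 : A2 -> A2 -> A2) (w2 : A2 -> K).
Hypotheses (h1 : baric mul1 w1) (h2 : baric mul2 w2)
  (a1 : is_associative mul1) (a2 : is_associative mul2).

Lemma comp1 x y z : (associator (bowtie_mul mul1 w1 mul2 w2) x y z).1 =
   w2 y.2 *: (mul1 x.1 z.1 - w1 z.1 *: x.1).
Proof.
case: x y z => [x1 x2] [y1 y2] [z1 z2] /=.
rewrite /associator /bowtie_mul /=.
rewrite !(mulDl h1) !(mulDr h1) !(mulZl h1) !(mulZr h1) (assocE a1).
rewrite (wD h2) (wZ h2) (wM h2) !scalerDr !scalerDl !scalerA ?scalerBr ?scalerA.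
rewrite scalerN scalerA [w2 z2 * w2 y2]mulrC [w1 z1 * w2 y2]mulrC.
exact: zm5.
Qed.

Lemma comp2 x y z : (associator (bowtie_mul mul1 w1 mul2 w2) x y z).2 =
   w1 y.1 *: (mul2 x.2 z.2 - w2 z.2 *: x.2).
Proof.
case: x y z => [x1 x2] [y1 y2] [z1 z2] /=.
rewrite /associator /bowtie_mul /=.
rewrite !(mulDl h2) !(mulDr h2) !(mulZl h2) !(mulZr h2) (assocE a2).
rewrite (wD h1) (wZ h1) (wM h1) !scalerDr !scalerDl !scalerA ?scalerBr ?scalerA.
rewrite scalerN scalerA [w1 z1 * w1 y1]mulrC [w2 z2 * w1 y1]mulrC.
exact: zm5.
Qed.

Lemma assoc_of (D1 : forall a c, mul1 a c - w1 c *: a = 0)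
  (D2 : forall a c, mul2 a c - w2 c *: a = 0) :
  is_associative (bowtie_mul mul1 w1 mul2 w2).
Proof.
move=> x y z.
have e1 := comp1 x y z; have e2 := comp2 x y z.
rewrite D1 scaler0 in e1; rewrite D2 scaler0 in e2.
move: e1 e2; case: (associator _ x y z) => u v /= -> -> //.
Qed.
End Main.

Lemma cancelw (K : fieldType) (A : lmodType K) (k : K) (v : A) : k != 0 -> k *: v = 0 -> v = 0.
Proof. by move=> hk /eqP; rewrite scaler_eq0 (negbTE hk) /= => /eqP. Qed.

Theorem proposition6p2 (K : fieldType) (A1 A2 : lmodType K)
    (mul1 : A1 -> A1 -> A1) (w1 : A1 -> K)
    (mul2 : A2 -> A2 -> A2) (w2 : A2 -> K) :
  baric mul1 w1 -> baric mul2 w2 ->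
  is_associative mul1 -> is_associative mul2 ->
  (is_associative (bowtie_mul mul1 w1 mul2 w2) <->
     left_alternative (bowtie_mul mul1 w1 mul2 w2)) /\
  (is_associative (bowtie_mul mul1 w1 mul2 w2) <->
     right_alternative (bowtie_mul mul1 w1 mul2 w2)).
Proof.
move=> h1 h2 a1 a2.
have [e1 he1] : exists x : A1, w1 x != 0 by case: h1.
have [e2 he2] : exists x : A2, w2 x != 0 by case: h2.
split; split.
- by move=> H x y; apply: H.
- move=> H; apply: (assoc_of h1 h2 a1 a2) => a c.
  + apply: (@cancelw K A1 (w2 e2) _ he2); have := comp1 h1 h2 a1 (a, e2) (a, e2) (c, e2).
    by rewrite H => <-.
  + apply: (@cancelw K A2 (w1 e1) _ he1); have := comp2 h1 h2 a2 (e1, a) (e1, a) (e1, c).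
    by rewrite H => <-.
- by move=> H x y; apply: H.
- move=> H; apply: (assoc_of h1 h2 a1 a2) => a c.
  + apply: (@cancelw K A1 (w2 e2) _ he2); have := comp1 h1 h2 a1 (a, e2) (c, e2) (c, e2).
    by rewrite H => <-.
  + apply: (@cancelw K A2 (w1 e1) _ he1); have := comp2 h1 h2 a2 (e1, a) (e1, c) (e1, c).
    by rewrite H => <-.
Qed.
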